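(* Let $G$ be an uncountable group of regular cardinality $\gamma$. Then the ballean $\mathcal{B}(G)$ is decomposable in a direct product, i.e. it is asymorphic to $\mathcal{B}(Z)$ for some direct product $Z=\otimes_{\lambda<\delta}(Z_\lambda,e_\lambda)$ of a pointed family of non-empty sets.
   Context: For an infinite group $G$ with identity $e$, $\mathcal{B}(G)=(G,\mathcal{F},B)$ where $\mathcal{F}=\{A\subseteq G: e\in A, |A|<|G|\}$ and $B(g,A)=gA$. For balleans $(X_1,P_1,B_1)$, $(X_2,P_2,B_2)$ (sets with families of balls $B(x,\alpha)\subseteq X$ indexed by $x\in X,\alpha\in P$), a map $f:X_1\to X_2$ is a $\prec$-mapping if for every $\alpha\in P_1$ there is $\beta\in P_2$ with $f(B_1(x,\alpha))\subseteq B_2(f(x),\beta)$ for all $x$; a bijection $f$ is an asymorphism if $f$ and $f^{-1}$ are $\prec$-mappings. Given an ordinal $\delta$ and non-empty sets $Z_\lambda$ ($\lambda<\delta$) with chosen points $e_\lambda\in Z_\lambda$, the direct product $Z=\otimes_{\lambda<\delta}(Z_\lambda,e_\lambda)$ is the set of functions $f$ on $\{\lambda:\lambda<\delta\}$ with $f(\lambda)\in Z_\lambda$ and $f(\lambda)=e_\lambda$ for all but finitely many $\lambda$; its ballean is $\mathcal{B}(Z)=(Z,\{\lambda:\lambda<\delta\},B)$ with $B(f,\lambda)=\{g\in Z: g(\lambda')=f(\lambda')\text{ for all }\lambda\le\lambda'<\delta\}$. *)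

(* Defs.v *)
From Stdlib Require Import List.
Set Implicit Arguments.

Definition is_group (G : Type) (mul : G -> G -> G) (e : G) (inv : G -> G) : Prop :=
  (forall x y z, mul x (mul y z) = mul (mul x y) z) /\
  (forall x, mul e x = x) /\ (forall x, mul x e = x) /\
  (forall x, mul (inv x) x = e) /\ (forall x, mul x (inv x) = e).

Definition injective {A B : Type} (f : A -> B) : Prop :=
  forall x y, f x = f y -> x = y.

Definition smaller_than_carrier (G : Type) (A : G -> Prop) : Prop :=
  ~ exists f : G -> G, injective f /\ forall x, A (f x).

Definition type_smaller (I G : Type) : Prop :=
  ~ exists f : G -> I, injective f.

Definition uncountable (G : Type) : Prop := ~ exists f : G -> nat, injective f.

Definition regular_card (G : Type) : Prop :=
  forall (I : Type) (A : I -> G -> Prop),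
    type_smaller I G -> (forall i, smaller_than_carrier (A i)) ->
    exists x, forall i, ~ A i x.

(* A ballean (X, P, B) is given by B : X -> P -> (X -> Prop);
   B x a y means y ∈ B(x, a). *)
Definition prec_map {X1 P1 X2 P2 : Type}
  (B1 : X1 -> P1 -> X1 -> Prop) (B2 : X2 -> P2 -> X2 -> Prop) (f : X1 -> X2) : Prop :=
  forall a : P1, exists b : P2, forall x y, B1 x a y -> B2 (f x) b (f y).

Definition asymorphic {X1 P1 X2 P2 : Type}
  (B1 : X1 -> P1 -> X1 -> Prop) (B2 : X2 -> P2 -> X2 -> Prop) : Prop :=
  exists (f : X1 -> X2) (g : X2 -> X1),
    (forall x, g (f x) = x) /\ (forall y, f (g y) = y) /\
    prec_map B1 B2 f /\ prec_map B2 B1 g.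

Definition group_radius (G : Type) (e : G) : Type :=
  { A : G -> Prop | A e /\ smaller_than_carrier A }.

Definition group_ball (G : Type) (mul : G -> G -> G) (e : G)
  (g : G) (A : group_radius e) (y : G) : Prop :=
  exists a, proj1_sig A a /\ y = mul g a.

(* Strict well-order on an index type (a representative of an ordinal delta). *)
Definition strict_well_order (I : Type) (lt : I -> I -> Prop) : Prop :=
  (forall x, ~ lt x x) /\
  (forall x y z, lt x y -> lt y z -> lt x z) /\
  (forall x y, lt x y \/ x = y \/ lt y x) /\
  well_founded lt.

Definition dprod (I : Type) (Z : I -> Type) (ez : forall i, Z i) : Type :=
  { f : forall i, Z i | exists s : list I, forall i, f i <> ez i -> In i s }.

Definition dprod_ball (I : Type) (lt : I -> I -> Prop) (Z : I -> Type)
  (ez : forall i, Z i) (f : dprod Z ez) (l : I) (g : dprod Z ez) : Prop :=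
  forall l', (lt l l' \/ l = l') -> proj1_sig g l' = proj1_sig f l'.

(* Main.v *)
From Stdlib Require Import List Classical ClassicalEpsilon FunctionalExtensionality PropExtensionality ProofIrrelevance Wellfounded.
Require Import Defs.
From mathcomp Require boolp wochoice.

Module WOx.
Import ssreflect ssrbool eqtype boolp wochoice.
Lemma wo_exists (T : Type) : exists R : T -> T -> Prop,
  (forall x y, R x y -> R y x -> x = y) /\
  (forall P : T -> Prop, (exists x, P x) -> exists z, P z /\ forall y, P y -> R z y).
Proof.
have [R HR] := well_ordering_principle {classic T}.
have minP : forall P : T -> Prop, (exists x, P x) -> exists z, P z /\ forall y, P y -> R z y.
  move=> P [x Px].
  have ne : nonempty (fun u : {classic T} => `[< P u >]).
    by exists x; apply/asboolP.
  have [z [[Pz lb] _]] := HR _ ne.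
  exists z; split; first by move: Pz => /asboolP.
  by move=> y Py; apply: lb; apply/asboolP.
exists (fun x y => R x y); split=> //.
move=> x y Rxy Ryx.
have Rxx : R x x.
  have [|z [/= -> H]] := minP (fun u : T => u = x); [by exists x | exact: H].
have Ryy : R y y.
  have [|z [/= -> H]] := minP (fun u : T => u = y); [by exists y | exact: H].
have ne : nonempty (fun u : {classic T} => `[< u = x \/ u = y >]).
  by exists x; apply/asboolP; left.
have [z [_ Uz]] := HR _ ne.
have mx : minimum_of R (fun u : {classic T} => `[< u = x \/ u = y >]) x.
  split; first by apply/asboolP; left.
  by move=> u /asboolP [->|->].
have my : minimum_of R (fun u : {classic T} => `[< u = x \/ u = y >]) y.
  split; first by apply/asboolP; right.
  by move=> u /asboolP [->|->].
by rewrite -(Uz _ mx) -(Uz _ my).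
Qed.
End WOx.

Lemma sig_ext (A : Type) (P : A -> Prop) (a b : {x : A | P x}) :
  proj1_sig a = proj1_sig b -> a = b.
Proof. destruct a, b; simpl; intro; subst; f_equal; apply proof_irrelevance. Qed.

Section Ord.
Variable T : Type.
Variable lt : T -> T -> Prop.
Hypothesis Hwo : strict_well_order lt.
Definition le x y := lt x y \/ x = y.

Lemma lt_irr x : ~ lt x x. Proof. apply Hwo. Qed.
Lemma lt_trans x y z : lt x y -> lt y z -> lt x z. Proof. apply Hwo. Qed.
Lemma lt_tri x y : lt x y \/ x = y \/ lt y x. Proof. apply Hwo. Qed.
Lemma lt_wf : well_founded lt. Proof. apply Hwo. Qed.
Lemma le_refl x : le x x. Proof. right; auto. Qed.
Lemma le_lt_trans x y z : le x y -> lt y z -> lt x z.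
Proof. intros [H|<-] H'; auto. eapply lt_trans; eauto. Qed.
Lemma lt_le_trans x y z : lt x y -> le y z -> lt x z.
Proof. intros H [H'|<-]; auto. eapply lt_trans; eauto. Qed.
Lemma le_trans x y z : le x y -> le y z -> le x z.
Proof. intros [H|<-] H'; auto. left; eapply lt_le_trans; eauto. Qed.
Lemma lt_not_le x y : lt x y -> ~ le y x.
Proof. intros H H'. apply (lt_irr x). eapply lt_le_trans; eauto. Qed.
Lemma not_lt_le x y : ~ lt x y -> le y x.
Proof. intros H. destruct (lt_tri x y) as [|[->|]]; [contradiction| right; auto | left; auto]. Qed.
Lemma lt_le x y : lt x y -> le x y. Proof. left; auto. Qed.
Lemma le_total x y : le x y \/ le y x.
Proof. destruct (lt_tri x y) as [|[->|]]; [left;left|left;right|right;left]; auto. Qed.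

Lemma min_ex (P : T -> Prop) : (exists x, P x) -> exists m, P m /\ forall y, P y -> le m y.
Proof.
  intros [x Px]. destruct (classic (exists m, P m /\ forall y, P y -> le m y)) as [H|H]; auto.
  exfalso. revert Px. induction (lt_wf x) as [a _ IH]. intros Pa.
  apply H. exists a; split; auto. intros y Py.
  destruct (classic (le a y)) as [|Hn]; auto. exfalso.
  apply (IH y); auto. destruct (lt_tri y a) as [|[->|]]; auto.
  - exfalso; apply Hn; right; auto.
  - exfalso; apply Hn; left; auto.
Qed.

Lemma list_max (s : list T) : forall P : T -> Prop, (forall x, P x -> In x s) ->
  (exists x, P x) -> exists m, P m /\ forall x, P x -> le x m.
Proof.
  induction s as [|a s IH]; intros P HP [x Px].
  - destruct (HP x Px).
  - destruct (classic (exists x, P x /\ x <> a)) as [[y [Py Hy]]|Hn].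
    + destruct (IH (fun x => P x /\ x <> a)) as [m [[Pm Hm] Hmax]].
      * intros z [Pz Hz]. destruct (HP z Pz); [congruence|auto].
      * exists y; auto.
      * destruct (classic (P a)) as [Pa|nPa].
        -- destruct (le_total a m) as [Ham|Hma].
           ++ exists m; split; auto. intros z Pz. destruct (classic (z = a)) as [->|].
              ** auto.
              ** apply Hmax; auto.
           ++ exists a; split; auto. intros z Pz. destruct (classic (z = a)) as [->|].
              ** apply le_refl.
              ** eapply le_trans; [apply Hmax; auto| auto].
        -- exists m; split; auto. intros z Pz. apply Hmax. split; auto. intros ->; auto.
    + exists a. assert (forall z, P z -> z = a).
      { intros z Pz. apply NNPP; intro; apply Hn; eauto. }
      split.
      * rewrite <- (H x Px); auto.
      * intros z Pz. rewrite (H z Pz). apply le_refl.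
Qed.
End Ord.

Lemma pullback_wo (T : Type) (lt : T -> T -> Prop) (h : T -> T) :
  strict_well_order lt -> injective h -> strict_well_order (fun a b => lt (h a) (h b)).
Proof.
  intros Hwo Hi. split; [|split; [|split]].
  - intros x; apply (lt_irr _ _ Hwo).
  - intros x y z; apply (lt_trans _ _ Hwo).
  - intros x y. destruct (lt_tri _ _ Hwo (h x) (h y)) as [|[E|]]; auto.
  - apply wf_inverse_image. apply (lt_wf _ _ Hwo).
Qed.
Section Grp.
Variables (G : Type) (mul : G -> G -> G) (e : G) (inv : G -> G).
Hypothesis Hg : is_group mul e inv.
Hypothesis Hunc : uncountable G.
Hypothesis Hreg : regular_card G.

Definition small (A : G -> Prop) := smaller_than_carrier A.

Lemma small_sub (A B : G -> Prop) : (forall x, A x -> B x) -> small B -> small A.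
Proof. intros H HB [f [fi fA]]; apply HB; exists f; split; auto. Qed.

Lemma union_small (I : Type) (B : I -> G -> Prop) :
  type_smaller I G -> (forall i, small (B i)) -> small (fun x => exists i, B i x).
Proof.
  intros HI HB [f [fi fA]].
  destruct (Hreg _ (fun i x => B i (f x)) HI) as [x Hx].
  - intros i [h [hi hA]]. apply (HB i). exists (fun y => f (h y)); split; auto.
    intros a b E; apply hi, fi, E.
  - destruct (fA x) as [i Hi]; exact (Hx i Hi).
Qed.

Lemma type_small_sig (A : G -> Prop) : small A -> type_smaller {x | A x} G.
Proof.
  intros HA [F Fi]; apply HA; exists (fun y => proj1_sig (F y)); split.
  - intros a b E; apply Fi; apply sig_ext; auto.
  - intros x; apply proj2_sig.
Qed.

Lemma nat_small : type_smaller nat G.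
Proof. exact Hunc. Qed.

Lemma bool_small : type_smaller bool G.
Proof.
  intros [f fi]; apply Hunc; exists (fun x => if f x then 0 else 1).
  intros a b E; apply fi; destruct (f a), (f b); simpl in E; congruence.
Qed.

Lemma union2_small (A B : G -> Prop) : small A -> small B -> small (fun x => A x \/ B x).
Proof.
  intros HA HB. apply small_sub with (fun x => exists b : bool, (if b then A else B) x).
  - intros x [H|H]; [exists true|exists false]; auto.
  - apply union_small; [apply bool_small|]. intros [|]; auto.
Qed.

Lemma single_small a : small (fun x => x = a).
Proof.
  intros [f [fi fA]]; apply Hunc; exists (fun _ => 0); intros x y _; apply fi.
  rewrite (fA x), (fA y); reflexivity.
Qed.

Lemma image_small (A : G -> Prop) (h : G -> G) :
  small A -> small (fun y => exists x, A x /\ y = h x).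
Proof.
  intros HA [f [fi fA]]. apply HA.
  assert (X : forall z, {x | A x /\ f z = h x}).
  { intro z; apply constructive_indefinite_description.
    destruct (fA z) as [x [Ax E]]; exists x; auto. }
  exists (fun z => proj1_sig (X z)); split.
  - intros a b E. apply fi.
    destruct (proj2_sig (X a)) as [_ Ea]; destruct (proj2_sig (X b)) as [_ Eb]. congruence.
  - intros z; apply (proj2_sig (X z)).
Qed.

Lemma not_small_all : ~ small (fun _ => True).
Proof. intro H; apply H; exists (fun x => x); split; auto. intros a b E; auto. Qed.

Lemma assoc x y z : mul x (mul y z) = mul (mul x y) z. Proof. apply Hg. Qed.
Lemma lid x : mul e x = x. Proof. apply Hg. Qed.
Lemma rid x : mul x e = x. Proof. apply Hg. Qed.
Lemma linv x : mul (inv x) x = e. Proof. apply Hg. Qed.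
Lemma rinv x : mul x (inv x) = e. Proof. apply Hg. Qed.
Lemma cancel_l a b : mul (inv a) (mul a b) = b.
Proof. rewrite assoc, linv, lid; auto. Qed.
Lemma cancel_r a b : mul a (mul (inv a) b) = b.
Proof. rewrite assoc, rinv, lid; auto. Qed.
Lemma inv_unique x y : mul x y = e -> y = inv x.
Proof. intro H. rewrite <- (cancel_l x y), H, rid; auto. Qed.
Lemma inv_inv a : inv (inv a) = a.
Proof. symmetry; apply inv_unique, linv. Qed.
Lemma inv_e : inv e = e.
Proof. symmetry; apply inv_unique, lid. Qed.
Lemma inv_mul a b : inv (mul a b) = mul (inv b) (inv a).
Proof.
  symmetry; apply inv_unique. rewrite assoc, <- (assoc a b), rinv, rid, rinv; auto.
Qed.

Inductive Wd (P : G -> Prop) : nat -> G -> Prop :=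
| Wd0 : Wd P 0 e
| WdS : forall n w s, Wd P n w -> (P s \/ P (inv s)) -> Wd P (Datatypes.S n) (mul w s).

Definition gen (P : G -> Prop) (g : G) := exists n, Wd P n g.

Lemma gen_e P : gen P e. Proof. exists 0; constructor. Qed.
Lemma gen_in (P : G -> Prop) s : P s -> gen P s.
Proof. intro H. exists 1. rewrite <- (lid s). constructor; auto. constructor. Qed.
Lemma gen_in' (P : G -> Prop) s : P (inv s) -> gen P s.
Proof. intro H. exists 1. rewrite <- (lid s). constructor; auto. constructor. Qed.
Lemma gen_mul P a b : gen P a -> gen P b -> gen P (mul a b).
Proof.
  intros Ha [m Hb]. revert a Ha. induction Hb as [|n w s Hw IH Hs]; intros a Ha.
  - rewrite rid; auto.
  - rewrite assoc. destruct (IH a Ha) as [k Hk]. exists (Datatypes.S k). constructor; auto.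
Qed.
Lemma gen_inv P a : gen P a -> gen P (inv a).
Proof.
  intros [n H]. induction H as [|n w s Hw IH Hs].
  - rewrite inv_e; apply gen_e.
  - rewrite inv_mul. apply gen_mul; auto.
    destruct Hs as [Hs|Hs]; [apply gen_in'; rewrite inv_inv; auto | apply gen_in; auto].
Qed.
Lemma gen_inv_iff P a : gen P (inv a) -> gen P a.
Proof. intro H; rewrite <- (inv_inv a); apply gen_inv; auto. Qed.
Lemma gen_mono (P Q : G -> Prop) : (forall x, P x -> Q x) -> forall g, gen P g -> gen Q g.
Proof.
  intros HPQ g [n H]; exists n. induction H; constructor; auto. destruct H0; auto.
Qed.

Lemma Wd_small P : small P -> forall n, small (Wd P n).
Proof.
  intros HP n. induction n as [|n IH].
  - apply small_sub with (fun x => x = e); [|apply single_small].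
    intros x H; inversion H; auto.
  - apply small_sub with (fun g => exists w : {w | Wd P n w},
        (fun y => exists x, (P x \/ P (inv x)) /\ y = mul (proj1_sig w) x) g).
    + intros g H. inversion H; subst. exists (exist _ w H1). simpl. eauto.
    + apply union_small; [apply type_small_sig; auto|].
      intros [w Hw]; simpl. apply image_small. apply union2_small; auto.
      apply small_sub with (fun y => exists x, P x /\ y = inv x).
      * intros y Hy. exists (inv y); split; auto. rewrite inv_inv; auto.
      * apply image_small; auto.
Qed.

Lemma gen_small P : small P -> small (gen P).
Proof.
  intros HP. apply union_small; [apply nat_small|]. apply Wd_small; auto.
Qed.

Lemma order_exists : exists lt : G -> G -> Prop,
  strict_well_order lt /\ forall x, small (fun y => lt y x).
Proof.
  destruct (WOx.wo_exists G) as [R [Ranti Rmin]].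
  set (lt0 := fun x y => R x y /\ x <> y).
  assert (Rrefl : forall x, R x x).
  { intro x. destruct (Rmin (fun u => u = x)) as [z [-> H]]; eauto. }
  assert (W0 : strict_well_order lt0).
  { split; [|split; [|split]].
    - intros x [_ H]; auto.
    - intros x y z [Hxy nxy] [Hyz nyz].
      destruct (Rmin (fun u => u = x \/ u = y \/ u = z)) as [m [Hm Hmin]]; eauto.
      destruct Hm as [Hm|[Hm|Hm]]; rewrite Hm in Hmin.
      + split. apply Hmin; auto. intros E. rewrite <- E in Hyz. apply nxy, Ranti; auto.
      + exfalso; apply nxy, Ranti; auto.
      + exfalso; apply nyz, Ranti; auto.
    - intros x y. destruct (classic (x = y)) as [|n]; auto.
      destruct (Rmin (fun u => u = x \/ u = y)) as [m [[Hm|Hm] Hmin]]; eauto; rewrite Hm in Hmin.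
      + left; split; auto.
      + right; right; split; auto.
    - intros a. apply NNPP; intro Hna.
      destruct (Rmin (fun u => ~ Acc lt0 u)) as [z [Hz Hmin]]; eauto.
      apply Hz; constructor. intros y [Hyz nyz]. apply NNPP; intro Hy.
      apply nyz, Ranti; auto. }
  destruct (classic (exists x, ~ small (fun y => lt0 y x))) as [Hex|Hn].
  - destruct (min_ex _ _ W0 _ Hex) as [x0 [Hx0 Hmin]].
    apply NNPP in Hx0. destruct Hx0 as [h [hi hx]].
    exists (fun a b => lt0 (h a) (h b)). split.
    + apply pullback_wo; auto.
    + intros x [f [fi fx]]. assert (Hle := Hmin (h x)).
      apply (lt_not_le _ _ W0 _ _ (hx x)). apply Hle.
      intros Hs. apply Hs. exists (fun z => h (f z)). split; auto.
      intros a b E; apply fi, hi, E.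
  - exists lt0; split; auto. intros x. apply NNPP; intro H; apply Hn; eauto.
Qed.
Section Main.
Variable lt : G -> G -> Prop.
Hypothesis Hwo : strict_well_order lt.
Hypothesis Hseg : forall x, small (fun y => lt y x).

Notation le := (le G lt).
Definition U x := gen (fun y => le y x).
Definition L x := gen (fun y => lt y x).

Lemma seg_le_small x : small (fun y => le y x).
Proof. apply union2_small; [apply Hseg | apply single_small]. Qed.
Lemma L_small x : small (L x). Proof. apply gen_small, Hseg. Qed.
Lemma L_e x : L x e. Proof. apply gen_e. Qed.
Lemma L_sub_U x g : L x g -> U x g.
Proof. apply gen_mono. intros y H; left; auto. Qed.
Lemma U_sub_L y x g : lt y x -> U y g -> L x g.
Proof. intro H. apply gen_mono. intros z Hz. eapply le_lt_trans; eauto. Qed.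
Lemma U_mono y x g : le y x -> U y g -> U x g.
Proof. intro H. apply gen_mono. intros z Hz. eapply le_trans; eauto. Qed.
Lemma L_mono y x g : le y x -> L y g -> L x g.
Proof. intro H. apply gen_mono. intros z Hz. eapply lt_le_trans; eauto. Qed.
Lemma U_self x : U x x. Proof. apply gen_in, le_refl. Qed.

Lemma L_cases x g : L x g -> g = e \/ exists y, lt y x /\ U y g.
Proof.
  intros [n H]. induction H as [|n w s Hw IH Hs]; auto.
  assert (Hs' : exists y, lt y x /\ U y s).
  { destruct Hs as [Hs|Hs].
    - exists s; split; auto. apply U_self.
    - exists (inv s); split; auto. apply gen_in'. apply le_refl. }
  right. destruct Hs' as [y2 [Hy2 Us]]. destruct IH as [->|[y1 [Hy1 Uw]]].
  - exists y2; rewrite lid; auto.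
  - destruct (le_total _ _ Hwo y1 y2) as [H12|H21].
    + exists y2; split; auto. apply gen_mul; auto. eapply U_mono; eauto.
    + exists y1; split; auto. apply gen_mul; auto. eapply U_mono; eauto.
Qed.

Definition lam_spec (g : G) : {m | U m g /\ forall y, U y g -> le m y} :=
  constructive_indefinite_description _
    (min_ex _ _ Hwo (fun x => U x g) (ex_intro (fun x => U x g) g (U_self g))).
Definition lam g := proj1_sig (lam_spec g).
Lemma U_lam g : U (lam g) g. Proof. apply (proj2_sig (lam_spec g)). Qed.
Lemma lam_le x g : U x g -> le (lam g) x. Proof. apply (proj2_sig (lam_spec g)). Qed.

Lemma L_lam_lt x g : L x g -> g = e \/ lt (lam g) x.
Proof.
  intro H. destruct (L_cases x g H) as [|[y [Hy Uy]]]; auto.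
  right. eapply le_lt_trans; eauto. apply lam_le; auto.
Qed.
Lemma lam_L g : L (lam g) g -> g = e.
Proof.
  intro H. destruct (L_lam_lt _ _ H) as [|H']; auto. exfalso; eapply lt_irr; eauto.
Qed.

Lemma small_in_L (A : G -> Prop) : small A -> exists x, forall a, A a -> L x a.
Proof.
  intros HA. apply NNPP; intro Hn. apply not_small_all.
  apply small_sub with (fun y => exists a : {a | A a}, (fun y => le y (lam (proj1_sig a))) y).
  - intros y _. apply NNPP; intro Hy. apply Hn. exists y. intros a Aa. apply NNPP; intro Hna.
    apply Hy. exists (exist _ a Aa); simpl. apply not_lt_le; auto. intro Hl.
    apply Hna. eapply U_sub_L; eauto. apply U_lam.
  - apply union_small; [apply type_small_sig; auto|]. intros a; apply seg_le_small.
Qed.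

(* coset representatives *)
Definition rep x g := epsilon (inhabits e) (fun h => L x (mul (inv g) h) /\ (L x g -> h = e)).
Lemma rep_spec x g : L x (mul (inv g) (rep x g)) /\ (L x g -> rep x g = e).
Proof.
  unfold rep. apply epsilon_spec. destruct (classic (L x g)) as [H|H].
  - exists e. rewrite rid. split; auto. apply gen_inv; auto.
  - exists g. rewrite linv. split; [apply L_e|]. intro; contradiction.
Qed.
Lemma rep_L x g : L x (mul (inv g) (rep x g)). Proof. apply rep_spec. Qed.
Lemma rep_e x g : L x g -> rep x g = e. Proof. apply rep_spec. Qed.
Lemma rep_eq x g g' : L x (mul (inv g) g') -> rep x g = rep x g'.
Proof.
  intro H. unfold rep. f_equal. apply functional_extensionality; intro h.
  apply propositional_extensionality.
  assert (E1 : forall h, mul (inv g') h = mul (inv (mul (inv g) g')) (mul (inv g) h)).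
  { intro k. rewrite inv_mul, inv_inv, <- assoc, cancel_r. auto. }
  assert (E2 : forall h, mul (inv g) h = mul (mul (inv g) g') (mul (inv g') h)).
  { intro k. rewrite <- assoc, cancel_r. auto. }
  assert (E3 : g' = mul g (mul (inv g) g')) by (rewrite cancel_r; auto).
  assert (E4 : g = mul g' (inv (mul (inv g) g'))) by (rewrite inv_mul, inv_inv, cancel_r; auto).
  split; intros [H1 H2]; split.
  - rewrite E1. apply gen_mul; auto. apply gen_inv; auto.
  - intro H3. apply H2. rewrite E4. apply gen_mul; auto. apply gen_inv; auto.
  - rewrite E2. apply gen_mul; auto.
  - intro H3. apply H2. rewrite E3. apply gen_mul; auto.
Qed.
Lemma rep_U x g : U x g -> U x (rep x g).
Proof.
  intro H. rewrite <- (cancel_r g (rep x g)). apply gen_mul; auto. apply L_sub_U, rep_L.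
Qed.
Lemma rep_idem x g : rep x (rep x g) = rep x g.
Proof.
  symmetry. apply rep_eq. apply rep_L.
Qed.
Lemma rep_ne x g : ~ L x g -> rep x g <> e.
Proof.
  intros H E. apply H. pose proof (rep_L x g) as H1. rewrite E, rid in H1.
  apply gen_inv_iff; auto.
Qed.

Definition Rd a b := b <> e /\ (a = e \/ lt (lam a) (lam b)).
Lemma Rd_wf : well_founded Rd.
Proof.
  assert (Ae : Acc Rd e). { constructor. intros y [H _]. contradiction. }
  assert (forall x, Acc lt x -> forall b, lam b = x -> Acc Rd b).
  { intros x Hx. induction Hx as [x _ IH]. intros b Eb. constructor.
    intros a [_ [->|Hl]]; auto. apply (IH (lam a)); auto. rewrite <- Eb; auto. }
  intro b. apply (H (lam b)); auto. apply lt_wf; auto.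
Qed.

Definition nxt g := mul (inv (rep (lam g) g)) g.
Lemma nxt_L g : L (lam g) (nxt g).
Proof.
  unfold nxt. pose proof (rep_L (lam g) g) as H. apply gen_inv in H.
  rewrite inv_mul, inv_inv in H. auto.
Qed.
Lemma nxt_dec g : g <> e -> Rd (nxt g) g.
Proof. intro H. split; auto. apply L_lam_lt, nxt_L. Qed.

Definition dstep (g : G) (rec : forall g', Rd g' g -> G -> G) : G -> G :=
  match excluded_middle_informative (g = e) with
  | left _ => fun _ => e
  | right ne => fun x => if excluded_middle_informative (x = lam g) then rep (lam g) g
                        else rec (nxt g) (nxt_dec g ne) x
  end.
Definition d := Fix Rd_wf (fun _ => G -> G) dstep.
Lemma d_eq g : d g = dstep g (fun g' _ => d g').
Proof.
  unfold d. apply (Fix_eq Rd_wf (fun _ => G -> G) dstep). intros x f1 f2 Hf. unfold dstep.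
  destruct (excluded_middle_informative (x = e)); auto.
  apply functional_extensionality; intro y.
  destruct (excluded_middle_informative (y = lam x)); auto. rewrite Hf; auto.
Qed.
Lemma d_e x : d e x = e.
Proof. rewrite d_eq. unfold dstep. destruct (excluded_middle_informative (e = e)); auto. congruence. Qed.
Lemma d_top g : d g (lam g) = rep (lam g) g.
Proof.
  rewrite d_eq. unfold dstep. destruct (excluded_middle_informative (g = e)) as [E|].
  - symmetry; apply rep_e. rewrite E; apply L_e.
  - destruct (excluded_middle_informative (lam g = lam g)); auto. congruence.
Qed.
Lemma d_other g x : g <> e -> x <> lam g -> d g x = d (nxt g) x.
Proof.
  intros H1 H2. rewrite d_eq. unfold dstep. destruct (excluded_middle_informative (g = e)); [contradiction|].
  destruct (excluded_middle_informative (x = lam g)); auto. contradiction.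
Qed.

Lemma d_above g x : lt (lam g) x -> d g x = e.
Proof.
  revert x. induction g as [g IH] using (well_founded_ind Rd_wf). intros x Hx.
  destruct (classic (g = e)) as [->|ne]; [apply d_e|].
  rewrite d_other; auto.
  - destruct (nxt_dec g ne) as [_ [E|Hl]].
    + rewrite E; apply d_e.
    + apply IH; [apply nxt_dec; auto|]. eapply lt_trans; eauto.
  - intros ->. eapply lt_irr; eauto.
Qed.

Lemma d_valid g x : U x (d g x) /\ rep x (d g x) = d g x.
Proof.
  revert x. induction g as [g IH] using (well_founded_ind Rd_wf). intros x.
  destruct (classic (g = e)) as [->|ne].
  - rewrite d_e. split; [apply gen_e|apply rep_e, L_e].
  - destruct (classic (x = lam g)) as [->|nx].
    + rewrite d_top. split; [apply rep_U, U_lam | apply rep_idem].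
    + rewrite d_other; auto. apply IH, nxt_dec; auto.
Qed.

Lemma d_fin g : exists s, forall x, d g x <> e -> In x s.
Proof.
  induction g as [g IH] using (well_founded_ind Rd_wf).
  destruct (classic (g = e)) as [->|ne].
  - exists nil. intros x H; apply H, d_e.
  - destruct (IH (nxt g) (nxt_dec g ne)) as [s Hs]. exists (lam g :: s).
    intros x Hx. destruct (classic (x = lam g)) as [->|nx]; [left; auto|].
    right; apply Hs. rewrite <- d_other; auto.
Qed.

Lemma F1 x g : L x g <-> forall y, le x y -> d g y = e.
Proof.
  split.
  - intros H y Hy. destruct (L_lam_lt _ _ H) as [->|Hl]; [apply d_e|].
    apply d_above. eapply lt_le_trans; eauto.
  - intros H. apply NNPP; intro Hn.
    assert (ne : g <> e) by (intros ->; apply Hn, L_e).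
    assert (Hx : le x (lam g)).
    { apply not_lt_le; auto. intro Hl. apply Hn. eapply U_sub_L; eauto. apply U_lam. }
    apply (rep_ne (lam g) g).
    + intro H'; apply ne, lam_L; auto.
    + rewrite <- d_top. apply H; auto.
Qed.

Definition agree x g h := forall y, le x y -> d g y = d h y.

Lemma agree_iff g : forall h x, agree x g h <-> L x (mul (inv g) h).
Proof.
  induction g as [g IH] using (well_founded_ind Rd_wf). intros h x.
  destruct (classic (g = e)) as [->|ng].
  { rewrite inv_e, lid, F1. unfold agree. split; intros H y Hy.
    - rewrite <- (H y Hy); apply d_e.
    - rewrite (H y Hy); apply d_e. }
  destruct (classic (h = e)) as [->|nh].
  { rewrite rid. split.
    - intros H. apply gen_inv. apply F1. intros y Hy. rewrite (H y Hy). apply d_e.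
    - intros H. pose proof (proj1 (F1 x g) (gen_inv_iff _ _ H)) as H'. intros y Hy. rewrite d_e; auto. }
  destruct (classic (L x g /\ L x h)) as [[Hg1 Hh1]|Hn].
  { split; intros _.
    - apply gen_mul; auto. apply gen_inv; auto.
    - intros y Hy. rewrite F1 in Hg1, Hh1. rewrite Hg1, Hh1; auto. }
  assert (Lg : ~ L (lam g) g) by (intro H; apply ng, lam_L; auto).
  assert (Lh : ~ L (lam h) h) by (intro H; apply nh, lam_L; auto).
  destruct (lt_tri _ _ Hwo (lam g) (lam h)) as [Hab|[Eab|Hba]].
  -
    assert (Hx : le x (lam h)).
    { apply not_lt_le; auto. intro Hl. apply Hn. split.
      - apply (U_sub_L (lam g)); [eapply lt_trans; eauto | apply U_lam].
      - apply (U_sub_L (lam h)); [auto | apply U_lam]. }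
    split.
    + intro H. exfalso. specialize (H (lam h) Hx). rewrite d_top, d_above in H; auto.
      apply (rep_ne _ _ Lh); auto.
    + intro H. exfalso. apply Lh. apply (L_mono x (lam h)) in H; auto.
      assert (Hg' : L (lam h) g) by (apply (U_sub_L (lam g)); [auto | apply U_lam]).
      pose proof (gen_mul _ _ _ Hg' H) as K. rewrite cancel_r in K. exact K.
  -
    assert (Hx : le x (lam g)).
    { apply not_lt_le; auto. intro Hl. apply Hn. split.
      - apply (U_sub_L (lam g)); [auto | apply U_lam].
      - apply (U_sub_L (lam h)); [rewrite <- Eab; auto | apply U_lam]. }
    destruct (classic (rep (lam g) g = rep (lam g) h)) as [Er|Nr].
    + assert (Eg : agree x g h <-> agree x (nxt g) (nxt h)).
      { assert (Hn1 : d (nxt g) (lam g) = e).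
        { destruct (nxt_dec g ng) as [_ [E|Hl]]; [rewrite E; apply d_e|apply d_above; auto]. }
        assert (Hn2 : d (nxt h) (lam g) = e).
        { rewrite Eab. destruct (nxt_dec h nh) as [_ [E|Hl]]; [rewrite E; apply d_e|apply d_above; auto]. }
        unfold agree; split; intros H y Hy; destruct (classic (y = lam g)) as [->|ny].
        - rewrite Hn1, Hn2; auto.
        - rewrite <- d_other, <- d_other; auto. rewrite <- Eab; auto.
        - rewrite d_top. rewrite Eab at 2. rewrite d_top. rewrite <- Eab. auto.
        - rewrite d_other, (d_other h); auto. rewrite <- Eab; auto. }
      rewrite Eg, IH; [|apply nxt_dec; auto].
      unfold nxt. rewrite <- Eab, <- Er, inv_mul, inv_inv, <- assoc, cancel_r. tauto.
    + split.
      * intro H. exfalso. apply Nr. specialize (H (lam g) Hx). rewrite d_top in H.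
        rewrite Eab in H at 2. rewrite d_top in H. rewrite <- Eab in H. auto.
      * intro H. exfalso. apply Nr. apply rep_eq. eapply L_mono; eauto.
  -
    assert (Hx : le x (lam g)).
    { apply not_lt_le; auto. intro Hl. apply Hn. split.
      - apply (U_sub_L (lam g)); [auto | apply U_lam].
      - apply (U_sub_L (lam h)); [eapply lt_trans; eauto | apply U_lam]. }
    split.
    + intro H. exfalso. specialize (H (lam g) Hx). rewrite d_top, (d_above h) in H; auto.
      apply (rep_ne _ _ Lg); auto.
    + intro H. exfalso. apply Lg. apply (L_mono x (lam g)) in H; auto.
      assert (Hh' : L (lam g) h) by (apply (U_sub_L (lam h)); [auto | apply U_lam]).
      pose proof (gen_mul _ _ _ Hh' (gen_inv _ _ H)) as K.
      rewrite inv_mul, inv_inv, cancel_r in K. exact K.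
Qed.

Lemma L_min : exists m, forall g, L m g -> g = e.
Proof.
  destruct (min_ex _ _ Hwo (fun _ => True) (ex_intro _ e I)) as [m [_ Hm]].
  exists m. intros g H. destruct (L_cases _ _ H) as [|[y [Hy _]]]; auto.
  exfalso. apply (lt_not_le _ _ Hwo _ _ Hy). apply Hm; auto.
Qed.

Lemma d_inj g h : (forall x, d g x = d h x) -> g = h.
Proof.
  intros H. destruct L_min as [m Hm].
  assert (A : agree m g h) by (intros y _; auto).
  apply agree_iff in A. apply Hm in A.
  rewrite <- (cancel_r g h), A, rid. auto.
Qed.

Lemma succ_ex m : exists a, lt m a.
Proof.
  apply NNPP; intro H. apply not_small_all.
  apply small_sub with (fun y => le y m); [|apply seg_le_small].
  intros y _. apply not_lt_le; auto. intro Hl. apply H; eauto.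
Qed.

Definition ValidF (F : G -> G) := forall x, U x (F x) /\ rep x (F x) = F x.
Definition FinF (F : G -> G) := exists s, forall x, F x <> e -> In x s.

Lemma surj_aux a : forall F, ValidF F -> FinF F -> (forall x, F x <> e -> lt x a) ->
  exists g, (g = e \/ lt (lam g) a) /\ forall x, d g x = F x.
Proof.
  induction a as [a IH] using (well_founded_ind (lt_wf _ _ Hwo)).
  intros F HV [s Hs] Ha.
  destruct (classic (exists x, F x <> e)) as [Hex|Hno].
  2:{ exists e. split; auto. intros x. rewrite d_e. apply NNPP; intro H; apply Hno; eauto. }
  destruct (list_max _ _ Hwo s (fun x => F x <> e) Hs Hex) as [m [Fm Hmax]].
  set (F' := fun x => if excluded_middle_informative (x = m) then e else F x).
  assert (HV' : ValidF F').
  { intros x. unfold F'. destruct (excluded_middle_informative (x = m)); auto.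
    split; [apply gen_e | apply rep_e, L_e]. }
  assert (HF' : FinF F').
  { exists s. intros x. unfold F'. destruct (excluded_middle_informative (x = m)).
    - intro H; contradiction.
    - apply Hs. }
  assert (Hb : forall x, F' x <> e -> lt x m).
  { intros x. unfold F'. destruct (excluded_middle_informative (x = m)) as [|nx].
    - intro H; contradiction.
    - intro H. destruct (Hmax x H) as [|]; auto. contradiction. }
  destruct (IH m (Ha m Fm) F' HV' HF' Hb) as [g' [Hg' Hd']].
  set (r := F m). destruct (HV m) as [Ur Rr]. fold r in Ur, Rr.
  assert (Lg' : L m g').
  { destruct Hg' as [->|Hl]; [apply L_e|]. eapply U_sub_L; eauto. apply U_lam. }
  set (g := mul r g').
  assert (Ug : U m g) by (apply gen_mul; auto; apply L_sub_U; auto).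
  assert (Rg : rep m g = r).
  { transitivity (rep m r); [|exact Rr]. symmetry. apply rep_eq. unfold g. rewrite cancel_l. auto. }
  assert (nLg : ~ L m g).
  { intro H. apply Fm. fold r. rewrite <- Rg. apply rep_e; auto. }
  assert (ng : g <> e) by (intros E; apply nLg; rewrite E; apply L_e).
  assert (lg : lam g = m).
  { destruct (lam_le _ _ Ug) as [Hl|]; auto. exfalso. apply nLg.
    eapply U_sub_L; eauto. apply U_lam. }
  assert (ng' : nxt g = g').
  { unfold nxt. rewrite lg, Rg. unfold g. apply cancel_l. }
  exists g. split.
  - right. rewrite lg. apply Ha; auto.
  - intros x. destruct (classic (x = m)) as [->|nx].
    + rewrite <- lg at 1. rewrite d_top, lg. auto.
    + rewrite d_other; auto; [|rewrite lg; auto]. rewrite ng', Hd'. unfold F'.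
      destruct (excluded_middle_informative (x = m)); auto. contradiction.
Qed.

Lemma d_surj F : ValidF F -> FinF F -> exists g, forall x, d g x = F x.
Proof.
  intros HV [s Hs].
  destruct (classic (exists x, F x <> e)) as [Hex|Hno].
  2:{ exists e. intros x. rewrite d_e. apply NNPP; intro H; apply Hno; eauto. }
  destruct (list_max _ _ Hwo s (fun x => F x <> e) Hs Hex) as [m [Fm Hmax]].
  destruct (succ_ex m) as [a Ha].
  destruct (surj_aux a F HV (ex_intro _ s Hs)) as [g [_ Hg']].
  - intros x Hx. eapply le_lt_trans; eauto.
  - eauto.
Qed.

Definition Zt x := {z : G | U x z /\ rep x z = z}.
Definition ezt x : Zt x := exist _ e (conj (gen_e _) (rep_e x e (L_e x))).

Lemma phi_fin g : exists s, forall i, exist (fun z => U i z /\ rep i z = z) (d g i) (d_valid g i) <> ezt i -> In i s.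
Proof.
  destruct (d_fin g) as [s Hs]. exists s. intros i H. apply Hs. intro E. apply H.
  apply sig_ext. simpl. auto.
Qed.

Definition phi (g : G) : dprod Zt ezt :=
  exist _ (fun i => exist (fun z => U i z /\ rep i z = z) (d g i) (d_valid g i)) (phi_fin g).

Lemma phi_inj g h : phi g = phi h -> g = h.
Proof.
  intros E. apply d_inj. intros x.
  exact (f_equal (fun f : dprod Zt ezt => proj1_sig (proj1_sig f x)) E).
Qed.

Lemma phi_surj f : exists g, phi g = f.
Proof.
  set (F := fun x => proj1_sig (proj1_sig f x)).
  assert (HV : ValidF F) by (intros x; apply (proj2_sig (proj1_sig f x))).
  assert (HF : FinF F).
  { destruct (proj2_sig f) as [s Hs]. exists s. intros x Hx. apply Hs. intro E.
    apply Hx. unfold F. rewrite E. reflexivity. }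
  destruct (d_surj F HV HF) as [g Hdg]. exists g.
  apply sig_ext. apply functional_extensionality_dep. intro x. apply sig_ext. simpl. apply Hdg.
Qed.

Lemma phi_agree g h x : (forall l, le x l -> proj1_sig (phi h) l = proj1_sig (phi g) l) <-> agree x g h.
Proof.
  split; intros H l Hl.
  - symmetry. exact (f_equal (@proj1_sig _ _) (H l Hl)).
  - apply sig_ext. simpl. symmetry; apply H; auto.
Qed.

Lemma main_exists : exists (I : Type) (lt' : I -> I -> Prop) (Z : I -> Type) (ez : forall i, Z i),
    strict_well_order lt' /\
    asymorphic (group_ball mul (e:=e)) (dprod_ball lt' (Z:=Z) (ez:=ez)).
Proof.
  exists G, lt, Zt, ezt. split; auto.
  set (psi := fun y : dprod Zt ezt => epsilon (inhabits e) (fun g => phi g = y)).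
  assert (Hpsi : forall y, phi (psi y) = y).
  { intros y. unfold psi. apply epsilon_spec. apply phi_surj. }
  exists phi, psi. split; [|split; [|split]].
  - intros x. apply phi_inj. apply Hpsi.
  - apply Hpsi.
  - intros A. destruct (small_in_L (proj1_sig A) (proj2 (proj2_sig A))) as [b Hb].
    exists b. intros x y [a [Aa ->]].
    intros l Hl. refine (proj2 (phi_agree x (mul x a) b) _ l Hl).
    apply agree_iff. rewrite cancel_l. auto.
  - intros b. exists (exist _ (L b) (conj (L_e b) (L_small b))).
    intros y y' Hyy. simpl.
    exists (mul (inv (psi y)) (psi y')). split.
    + apply agree_iff. apply phi_agree. rewrite !Hpsi. intros l Hl. exact (Hyy l Hl).
    + rewrite cancel_r. auto.
Qed.

End Main.
End Grp.

Theorem corollary2 (G : Type) (mul : G -> G -> G) (e : G) (inv : G -> G) :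
  is_group mul e inv ->
  uncountable G ->
  regular_card G ->
  exists (I : Type) (lt : I -> I -> Prop) (Z : I -> Type) (ez : forall i, Z i),
    strict_well_order lt /\
    asymorphic (group_ball mul (e:=e)) (dprod_ball lt (Z:=Z) (ez:=ez)).
Proof.
  intros Hg Hunc Hreg.
  destruct (order_exists G) as [lt [Hwo Hseg]].
  exact (main_exists G mul e inv Hg Hunc Hreg lt Hwo Hseg).
Qed.
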